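(* Let $w$ be a nonnegative weight function on $\mathbb R$ with finite moments and infinite support, $w_1(t)=(1+t^2)w(t)$, and let $t_1,\dots,t_n$ and $\lambda_1,\dots,\lambda_n$ be the nodes and weights of the $n$-point Gaussian quadrature rule for $w$. Set $x_j=\sqrt{t_j^2+1}$, $y_j=t_j$, and define $$\langle f,g\rangle_n=\sum_{j=1}^n\lambda_j\big[f(x_j,y_j)g(x_j,y_j)+f(-x_j,y_j)g(-x_j,y_j)\big].$$ Then the $2n$ polynomials $Y_{k,1}(x,y)=p_k(w;y)$, $0\le k\le n-1$, and $Y_{k,2}(x,y)=x\,p_{k-1}(w_1;y)$, $1\le k\le n$, are mutually orthogonal with respect to $\langle\cdot,\cdot\rangle_n$.
   Context: $p_k(v;\cdot)$ denotes an orthogonal polynomial of degree $k$ with respect to the weight $v$ (any fixed nonzero normalization). The $n$-point Gaussian quadrature rule for $v$ is the rule $\int g\,v\approx\sum_j\lambda_jg(t_j)$ with nodes the zeros of $p_n(v)$, exact for all polynomials of degree at most $2n-1$. *)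

(* Defs.v *)
From Stdlib Require Import Reals Lra List.
Open Scope R_scope.

Fixpoint rsum (n : nat) (f : nat -> R) : R :=
  match n with O => 0 | S m => rsum m f + f m end.

Definition is_integral_R (f : R -> R) (l : R) : Prop :=
  (forall a b : R, exists pr : Riemann_integrable f a b, True) /\
  forall eps : R, eps > 0 -> exists M : R, forall a b : R,
    a <= - M -> M <= b -> forall pr : Riemann_integrable f a b,
      Rabs (RiemannInt pr - l) < eps.

Definition weight_finite_moments (w : R -> R) : Prop :=
  (forall t, 0 <= w t) /\
  forall k : nat, exists m : R, is_integral_R (fun t => t ^ k * w t) m.

Definition in_support (w : R -> R) (t : R) : Prop :=
  forall eps : R, eps > 0 ->
    forall pr : Riemann_integrable w (t - eps) (t + eps), RiemannInt pr > 0.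

Definition infinite_support (w : R -> R) : Prop :=
  forall l : list R, exists t, in_support w t /\ ~ In t l.

Definition poly_le (g : R -> R) (d : nat) : Prop :=
  exists c : nat -> R, forall t, g t = rsum (S d) (fun i => c i * t ^ i).

Definition orth_poly (v : R -> R) (k : nat) (p : R -> R) : Prop :=
  (exists c : nat -> R, c k <> 0 /\
     forall t, p t = rsum (S k) (fun i => c i * t ^ i)) /\
  forall (m : nat) (q : R -> R), (m < k)%nat -> poly_le q m ->
    is_integral_R (fun t => p t * q t * v t) 0.

Definition ip_n (n : nat) (t lam : nat -> R) (f g : R -> R -> R) : R :=
  rsum n (fun j =>
    let x := sqrt (t j ^ 2 + 1) in
    let y := t j in
    lam j * (f x y * g x y + f (- x) y * g (- x) y)).

(* Main.v *)
Require Import Defs.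
From Stdlib Require Import Reals List Lra Lia FunctionalExtensionality.
Open Scope R_scope.

Lemma rsum_ext n f g : (forall i, (i < n)%nat -> f i = g i) -> rsum n f = rsum n g.
Proof.
  induction n; intros H; simpl; auto.
  rewrite IHn by (intros; apply H; lia). rewrite H by lia. reflexivity.
Qed.

Lemma rsum_plus n f g : rsum n (fun i => f i + g i) = rsum n f + rsum n g.
Proof. induction n; simpl; [ring|rewrite IHn; ring]. Qed.

Lemma rsum_scal n a f : rsum n (fun i => a * f i) = a * rsum n f.
Proof. induction n; simpl; [ring|rewrite IHn; ring]. Qed.

Lemma rsum_zero n : rsum n (fun _ => 0) = 0.
Proof. induction n; simpl; [ring|rewrite IHn; ring]. Qed.

Lemma rsum_shift n f : rsum (S n) f = f O + rsum n (fun i => f (S i)).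
Proof. induction n; simpl in *; [ring|rewrite IHn; ring]. Qed.

Lemma poly_le_ext f g d : poly_le f d -> (forall t, f t = g t) -> poly_le g d.
Proof. intros [c Hc] E; exists c; intros; rewrite <- E; auto. Qed.

Lemma poly_le_S f d : poly_le f d -> poly_le f (S d).
Proof.
  intros [c Hc]. exists (fun i => if Nat.leb i d then c i else 0).
  intros t. rewrite Hc. change (rsum (S (S d)) ?F) with (rsum (S d) F + F (S d)).
  cbv beta. replace (Nat.leb (S d) d) with false by (symmetry; apply Nat.leb_gt; lia).
  replace (0 * t ^ S d) with 0 by ring. rewrite Rplus_0_r. apply rsum_ext. intros i Hi.
  replace (Nat.leb i d) with true by (symmetry; apply Nat.leb_le; lia). reflexivity.
Qed.

Lemma poly_le_mono f d d' : poly_le f d -> (d <= d')%nat -> poly_le f d'.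
Proof.
  intros H Hd. induction Hd; auto. apply poly_le_S; auto.
Qed.

Lemma poly_le_add f g d : poly_le f d -> poly_le g d -> poly_le (fun t => f t + g t) d.
Proof.
  intros [c Hc] [e He]. exists (fun i => c i + e i). intros t.
  rewrite Hc, He, <- rsum_plus. apply rsum_ext; intros; ring.
Qed.

Lemma poly_le_scal f a d : poly_le f d -> poly_le (fun t => a * f t) d.
Proof.
  intros [c Hc]. exists (fun i => a * c i). intros t.
  rewrite Hc, <- rsum_scal. apply rsum_ext; intros; ring.
Qed.

Lemma poly_le_shift f d : poly_le f d -> poly_le (fun t => t * f t) (S d).
Proof.
  intros [c Hc]. exists (fun i => match i with O => 0 | S j => c j end). intros t.
  rewrite Hc, (rsum_shift (S d)), <- rsum_scal. cbv beta. simpl pow at 2.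
  replace (0 * 1) with 0 by ring. rewrite Rplus_0_l.
  apply rsum_ext; intros; simpl; ring.
Qed.

Lemma poly_le_decomp f d : poly_le f (S d) ->
  exists a f', poly_le f' d /\ forall t, f t = a + t * f' t.
Proof.
  intros [c Hc]. exists (c O), (fun t => rsum (S d) (fun i => c (S i) * t ^ i)).
  split. { exists (fun i => c (S i)). reflexivity. }
  intros t. rewrite Hc, rsum_shift, <- rsum_scal. simpl pow at 1. f_equal; [ring|].
  apply rsum_ext; intros; simpl; ring.
Qed.

Lemma poly_le_mul d : forall f g e, poly_le f d -> poly_le g e ->
  poly_le (fun t => f t * g t) (d + e).
Proof.
  induction d; intros f g e Hf Hg.
  - destruct Hf as [c Hc]. simpl.
    apply poly_le_ext with (fun t => c O * g t); [apply poly_le_scal; auto|].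
    intros t; rewrite Hc; simpl; ring.
  - destruct (poly_le_decomp _ _ Hf) as [a [f' [Hf' E]]].
    apply poly_le_ext with (fun t => a * g t + t * (f' t * g t)).
    + apply poly_le_add.
      * apply poly_le_mono with e; [apply poly_le_scal; auto| lia].
      * simpl. apply poly_le_shift. apply IHd; auto.
    + intros t; rewrite E; ring.
Qed.

Lemma is_integral_unique f l1 l2 : is_integral_R f l1 -> is_integral_R f l2 -> l1 = l2.
Proof.
  intros [Hi H1] [_ H2].
  destruct (Req_dec l1 l2) as [|Hne]; auto. exfalso.
  set (eps := Rabs (l1 - l2) / 2).
  assert (Heps : eps > 0).
  { unfold eps. assert (0 < Rabs (l1 - l2)) by (apply Rabs_pos_lt; lra). lra. }
  destruct (H1 eps Heps) as [M1 HM1]. destruct (H2 eps Heps) as [M2 HM2].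
  set (M := Rmax M1 M2).
  assert (M1 <= M) by apply Rmax_l. assert (M2 <= M) by apply Rmax_r.
  destruct (Hi (- M) M) as [pr _].
  specialize (HM1 (-M) M ltac:(lra) ltac:(lra) pr).
  specialize (HM2 (-M) M ltac:(lra) ltac:(lra) pr).
  apply Rabs_def2 in HM1. apply Rabs_def2 in HM2.
  unfold eps in *. destruct (Rcase_abs (l1 - l2)) as [Hl|Hl];
  [rewrite Rabs_left in * by lra | rewrite Rabs_right in * by lra]; lra.
Qed.

Lemma orth_poly_le v k p : orth_poly v k p -> poly_le p k.
Proof. intros [[c [_ Hc]] _]. exists c; auto. Qed.

Lemma poly_le_1s2 : poly_le (fun s => 1 + s ^ 2) 2.
Proof.
  exists (fun i => match i with O => 1 | 2%nat => 1 | _ => 0 end).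
  intros t; simpl; ring.
Qed.

Theorem corollary8p12
  (w : R -> R) (n : nat) (P Q : nat -> R -> R) (t lam : nat -> R)
  (hw : weight_finite_moments w) (hsupp : infinite_support w)
  (hP : forall k, (k <= n)%nat -> orth_poly w k (P k))
  (hQ : forall k, (k < n)%nat -> orth_poly (fun s => (1 + s ^ 2) * w s) k (Q k))
  (hnodes : forall j, (j < n)%nat -> P n (t j) = 0)
  (hdistinct : forall i j, (i < n)%nat -> (j < n)%nat -> t i = t j -> i = j)
  (hexact : forall g, poly_le g (2 * n - 1) ->
       is_integral_R (fun s => g s * w s) (rsum n (fun j => lam j * g (t j)))) :
  let Y1 := fun k : nat => fun x y : R => P k y in
  let Y2 := fun k : nat => fun x y : R => x * Q (k - 1)%nat y in
  (forall k l, (k < n)%nat -> (l < n)%nat -> k <> l -> ip_n n t lam (Y1 k) (Y1 l) = 0) /\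
  (forall k l, (1 <= k <= n)%nat -> (1 <= l <= n)%nat -> k <> l ->
       ip_n n t lam (Y2 k) (Y2 l) = 0) /\
  (forall k l, (k < n)%nat -> (1 <= l <= n)%nat -> ip_n n t lam (Y1 k) (Y2 l) = 0).
Proof.
  cbv zeta. split; [|split].
  - intros k l Hk Hl Hkl. unfold ip_n.
    rewrite (rsum_ext _ _ (fun j => 2 * (lam j * (P k (t j) * P l (t j)))))
      by (intros; ring).
    rewrite rsum_scal.
    assert (HE := hexact (fun s => P k s * P l s)).
    assert (Hpl : poly_le (fun s => P k s * P l s) (2 * n - 1)).
    { apply poly_le_mono with (k + l)%nat; [|lia].
      apply poly_le_mul; eapply orth_poly_le; apply hP; lia. }
    specialize (HE Hpl).
    assert (Z : is_integral_R (fun s => P k s * P l s * w s) 0).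
    { destruct (proj1 (Nat.lt_gt_cases k l) Hkl) as [H|H].
      - destruct (hP l ltac:(lia)) as [_ O]. specialize (O k (P k) H).
        replace (fun s => P k s * P l s * w s) with (fun t => P l t * P k t * w t).
        + apply O. eapply orth_poly_le; apply hP; lia.
        + apply functional_extensionality; intros; ring.
      - destruct (hP k ltac:(lia)) as [_ O]. apply (O l (P l) H).
        eapply orth_poly_le; apply hP; lia. }
    rewrite (is_integral_unique _ _ _ HE Z). ring.
  - intros k l Hk Hl Hkl. unfold ip_n.
    set (a := (k - 1)%nat). set (b := (l - 1)%nat).
    assert (Hab : a <> b) by (unfold a, b; lia).
    rewrite (rsum_ext _ _ (fun j => 2 * (lam j * (Q a (t j) * Q b (t j) * (1 + t j ^ 2))))).
    2:{ intros j _. assert (Hs := sqrt_sqrt (t j ^ 2 + 1)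
            ltac:(pose proof (pow2_ge_0 (t j)); lra)).
        replace (sqrt (t j ^ 2 + 1) * Q a (t j) * (sqrt (t j ^ 2 + 1) * Q b (t j)) +
          - sqrt (t j ^ 2 + 1) * Q a (t j) * (- sqrt (t j ^ 2 + 1) * Q b (t j)))
          with (2 * (sqrt (t j ^ 2 + 1) * sqrt (t j ^ 2 + 1)) * Q a (t j) * Q b (t j))
          by ring.
        rewrite Hs. ring. }
    rewrite rsum_scal.
    assert (HE := hexact (fun s => Q a s * Q b s * (1 + s ^ 2))).
    assert (Hpl : poly_le (fun s => Q a s * Q b s * (1 + s ^ 2)) (2 * n - 1)).
    { apply poly_le_mono with (a + b + 2)%nat; [|unfold a, b in *; lia].
      apply (poly_le_mul (a + b) (fun s => Q a s * Q b s)); [|apply poly_le_1s2].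
      apply poly_le_mul; eapply orth_poly_le; apply hQ; unfold a, b; lia. }
    specialize (HE Hpl).
    assert (Z : is_integral_R (fun s => Q a s * Q b s * (1 + s ^ 2) * w s) 0).
    { destruct (proj1 (Nat.lt_gt_cases a b) Hab) as [H|H].
      - destruct (hQ b ltac:(unfold b; lia)) as [_ O]. specialize (O a (Q a) H).
        replace (fun s => Q a s * Q b s * (1 + s ^ 2) * w s)
          with (fun t => Q b t * Q a t * ((1 + t ^ 2) * w t)).
        + apply O. eapply orth_poly_le; apply hQ; unfold a; lia.
        + apply functional_extensionality; intros; ring.
      - destruct (hQ a ltac:(unfold a; lia)) as [_ O]. specialize (O b (Q b) H).
        replace (fun s => Q a s * Q b s * (1 + s ^ 2) * w s)
          with (fun t => Q a t * Q b t * ((1 + t ^ 2) * w t)).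
        + apply O. eapply orth_poly_le; apply hQ; unfold b; lia.
        + apply functional_extensionality; intros; ring. }
    rewrite (is_integral_unique _ _ _ HE Z). ring.
  - intros k l Hk Hl. unfold ip_n.
    rewrite (rsum_ext _ _ (fun _ => 0)) by (intros; ring). apply rsum_zero.
Qed.
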